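(* The minimum $n$ for which there exist two distinct $n\times n\times n$ alternating sign hypermatrices $A$ and $B$ with $L(A)=L(B)$ is $4$. That is, no such pair exists for $n\le 3$, and such a pair exists for $n=4$.
   Context: An alternating sign hypermatrix (ASHM) is an $n\times n\times n$ hypermatrix $A=[a_{ijk}]$ with entries in $\{0,1,-1\}$ such that in every row line $[a_{ijk}: i=1,\dots,n]$ (fixed $j,k$), column line $[a_{ijk}: j=1,\dots,n]$ (fixed $i,k$) and vertical line $[a_{ijk}: k=1,\dots,n]$ (fixed $i,j$) the non-zero entries alternate in sign, starting and ending with $+1$. The $k$-th plane of $A$ is $P_k(A)=[a_{ijk}]_{i,j=1}^n$, and $L(A)=\sum_{k=1}^n k\,P_k(A)$ is an $n\times n$ matrix. *)

(* Defs.v *)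
From mathcomp Require Import all_boot all_order all_algebra.
Set Implicit Arguments. Unset Strict Implicit. Unset Printing Implicit Defensive.
Import Order.TTheory GRing.Theory Num.Theory.
Local Open Scope ring_scope.

(* An n x n x n hypermatrix with integer entries, A i j k = a_{ijk}
   (indices 0..n-1 represent 1..n). *)
Definition hypermatrix (n : nat) := {ffun 'I_n -> 'I_n -> 'I_n -> int}.

Definition alt_line (s : seq int) : bool :=
  let t := [seq x <- s | x != 0] in
  all (fun x => (x == 0) || (x == 1) || (x == -1)) s &&
  [&& odd (size t) &
      all (fun i => nth 0 t i == (-1) ^+ i) (iota 0 (size t))].

Definition is_ASHM (n : nat) (A : hypermatrix n) : bool :=
  [&& [forall j : 'I_n, forall k : 'I_n, alt_line [seq A i j k | i <- enum 'I_n]],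
      [forall i : 'I_n, forall k : 'I_n, alt_line [seq A i j k | j <- enum 'I_n]] &
      [forall i : 'I_n, forall j : 'I_n, alt_line [seq A i j k | k <- enum 'I_n]]].

Definition plane (n : nat) (A : hypermatrix n) (k : 'I_n) : 'M[int]_n :=
  \matrix_(i, j) A i j k.

(* L(A) = sum_{k=1}^n k P_k(A); the plane with 0-based index k has weight k+1. *)
Definition Lmat (n : nat) (A : hypermatrix n) : 'M[int]_n :=
  \sum_(k < n) (k.+1)%:R *: plane A k.

(* Main.v *)
Require Import Defs.
From mathcomp Require Import all_boot all_order all_algebra.
From Stdlib Require Import FunctionalExtensionality.
Import Order.TTheory GRing.Theory Num.Theory.
Local Open Scope ring_scope.

Lemma LmatE n (A : hypermatrix n) i j :
  Lmat A i j = \sum_(k < n) (k.+1)%:R * A i j k.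
Proof.
rewrite /Lmat summxE; apply: eq_bigr => k _.
by rewrite !mxE.
Qed.

Definition P3 (x y z : int) : bool :=
  [|| [&& x == 1, y == 0 & z == 0], [&& x == 0, y == 1 & z == 0],
      [&& x == 0, y == 0 & z == 1] | [&& x == 1, y == -1 & z == 1]].

Lemma tri (x : int) : (x == 0) || (x == 1) || (x == -1) ->
  [\/ x = 0, x = 1 | x = -1].
Proof. by move=> /orP[/orP[]|] /eqP ->; [constructor 1|constructor 2|constructor 3]. Qed.

Lemma alt3 x y z : alt_line [:: x; y; z] -> P3 x y z.
Proof.
move=> H; have := H; rewrite /alt_line /= => /andP[/and4P[hx hy hz _] _].
move: H; case: (tri _ hx) => ->; case: (tri _ hy) => ->;
  case: (tri _ hz) => ->; by vm_compute.
Qed.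

Definition o0 : 'I_3 := @Ordinal 3 0 isT.
Definition o1 : 'I_3 := @Ordinal 3 1 isT.
Definition o2 : 'I_3 := @Ordinal 3 2 isT.

Lemma enum3 : enum 'I_3 = [:: o0; o1; o2].
Proof. by apply: (inj_map val_inj); rewrite val_enum_ord. Qed.

Lemma ord3 (k : 'I_3) : [\/ k = o0, k = o1 | k = o2].
Proof.
case: k => [[|[|[|k]]] Hk] //.
- by constructor 1; apply: val_inj.
- by constructor 2; apply: val_inj.
- by constructor 3; apply: val_inj.
Qed.

Lemma L3E (A : hypermatrix 3) i j :
  Lmat A i j = A i j o0 + 2 * A i j o1 + 3 * A i j o2.
Proof.
rewrite LmatE !big_ord_recr big_ord0 /= add0r mul1r.
have -> : widen_ord (leqnSn 2) (widen_ord (leqnSn 1) ord_max) = o0 by apply: val_inj.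
have -> : widen_ord (leqnSn 2) ord_max = o1 by apply: val_inj.
by have -> : ord_max = o2 by apply: val_inj.
Qed.

Ltac bf1 := move=> /or4P[] /and3P[/eqP ? /eqP ? /eqP ?]; subst.

Lemma G1 x y z : P3 x y z -> (x != -1) && (z != -1) && ((y == -1) ==> (x == 1)).
Proof. by bf1; vm_compute. Qed.
Lemma G2 x y z : P3 x y z -> (y == 1) ==> (x == 0).
Proof. by bf1; vm_compute. Qed.
Lemma G3 x y z : P3 x y z -> (y != 0) = (x + 2 * y + 3 * z == 2).
Proof. by bf1; vm_compute. Qed.
Lemma G6 x y z : P3 x y z -> [|| y == 0, y == 1 | y == -1].
Proof. by bf1; vm_compute. Qed.
Lemma G7 a0 a1 a2 b0 b1 b2 : P3 a0 a1 a2 -> P3 b0 b1 b2 ->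
  (a0 + 2 * a1 + 3 * a2 == b0 + 2 * b1 + 3 * b2) ==> ((a1 == -1) == (b1 == -1)) ==>
  [&& a0 == b0, a1 == b1 & a2 == b2].
Proof. by bf1; bf1; vm_compute. Qed.

Arguments G1 {x y z}.
Arguments G2 {x y z}.
Arguments G3 {x y z}.
Arguments G6 {x y z}.
Arguments G7 {a0 a1 a2 b0 b1 b2}.
Section S.
Variable A : hypermatrix 3.
Hypothesis hA : is_ASHM A.
Lemma linesV i j : P3 (A i j o0) (A i j o1) (A i j o2).
Proof. case/and3P: hA => _ _ /forallP /(_ i) /forallP /(_ j); rewrite enum3 /=; exact: alt3. Qed.
Lemma linesR j k : P3 (A o0 j k) (A o1 j k) (A o2 j k).
Proof. case/and3P: hA => /forallP /(_ j) /forallP /(_ k) + _ _; rewrite enum3 /=; exact: alt3. Qed.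
Lemma linesC i k : P3 (A i o0 k) (A i o1 k) (A i o2 k).
Proof. case/and3P: hA => _ /forallP /(_ i) /forallP /(_ k) + _; rewrite enum3 /=; exact: alt3. Qed.
End S.
Arguments linesV {A} hA i j.
Arguments linesR {A} hA j k.
Arguments linesC {A} hA i k.

Lemma key (A B : hypermatrix 3) : is_ASHM A -> is_ASHM B -> Lmat A = Lmat B ->
  forall i j, A i j o1 = -1 -> B i j o1 = -1.
Proof.
move=> hA hB hL i j hm.
have W i' j' : A i' j' o0 + 2 * A i' j' o1 + 3 * A i' j' o2 =
               B i' j' o0 + 2 * B i' j' o1 + 3 * B i' j' o2.
  by have := congr1 (fun M : 'M[int]_3 => M i' j') hL; rewrite /= !L3E.
have hi : i = o1.
  have := G1 (linesR hA j o1).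
  have := G1 (linesR hA j o1).
  by case: (ord3 i) => -> // in hm *; rewrite hm eqxx /= ?andbF.
subst i.
have hj : j = o1.
  have := G1 (linesC hA o1 o1).
  by case: (ord3 j) => -> // in hm *; rewrite hm eqxx /= ?andbF.
subst j.
have a01 : A o0 o1 o1 = 1.
  by have := G1 (linesR hA o1 o1); rewrite hm eqxx /= => /andP[_ /eqP].
have wA01 := G3 (linesV hA o0 o1); rewrite W a01 /= in wA01.
have wAc := G3 (linesV hA o1 o1); rewrite W hm /= in wAc.
have b01 : B o0 o1 o1 != 0 by rewrite (G3 (linesV hB o0 o1)) -wA01.
have bc : B o1 o1 o1 != 0 by rewrite (G3 (linesV hB o1 o1)) -wAc.
case/or3P: (G6 (linesV hB o1 o1)) => /eqP e //; first by rewrite e in bc.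
by have := G2 (linesR hB o1 o1); rewrite e eqxx /= (negbTE b01).
Qed.

Lemma n3 (A B : hypermatrix 3) : is_ASHM A -> is_ASHM B -> Lmat A = Lmat B -> A = B.
Proof.
move=> hA hB hL; apply/ffunP => i; apply: functional_extensionality => j;
  apply: functional_extensionality => k.
have W : A i j o0 + 2 * A i j o1 + 3 * A i j o2 ==
         B i j o0 + 2 * B i j o1 + 3 * B i j o2.
  by have := congr1 (fun M : 'M[int]_3 => M i j) hL; rewrite /= !L3E => ->.
have hm : (A i j o1 == -1) == (B i j o1 == -1).
  apply/eqP; apply/eqP/eqP; [exact: key hA hB hL i j | exact: key hB hA (esym hL) i j].
have := G7 (linesV hA i j) (linesV hB i j); rewrite W hm /= => /and3P[/eqP e0 /eqP e1 /eqP e2].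
by case: (ord3 k) => ->.
Qed.

Definition P2 (x y : int) : bool := [|| (x == 1) && (y == 0) | (x == 0) && (y == 1)].
Lemma alt2 x y : alt_line [:: x; y] -> P2 x y.
Proof.
move=> H; have := H; rewrite /alt_line /= => /andP[/and3P[hx hy _] _].
move: H; case: (tri _ hx) => ->; case: (tri _ hy) => ->; by vm_compute.
Qed.
Lemma alt1 x : alt_line [:: x] -> x == 1.
Proof.
move=> H; have := H; rewrite /alt_line /= => /andP[/andP[hx _] _].
move: H; case: (tri _ hx) => ->; by vm_compute.
Qed.
Lemma H2 a0 a1 b0 b1 : P2 a0 a1 -> P2 b0 b1 ->
  (a0 + 2 * a1 == b0 + 2 * b1) ==> (a0 == b0) && (a1 == b1).
Proof.
by move=> /orP[] /andP[/eqP ? /eqP ?] /orP[] /andP[/eqP ? /eqP ?]; subst; vm_compute.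
Qed.
Definition q0 : 'I_2 := @Ordinal 2 0 isT.
Definition q1 : 'I_2 := @Ordinal 2 1 isT.
Lemma enum2 : enum 'I_2 = [:: q0; q1].
Proof. by apply: (inj_map val_inj); rewrite val_enum_ord. Qed.
Lemma ord2 (k : 'I_2) : k = q0 \/ k = q1.
Proof.
case: k => [[|[|k]] Hk] //.
- by left; apply: val_inj.
- by right; apply: val_inj.
Qed.
Lemma L2E (A : hypermatrix 2) i j :
  Lmat A i j = A i j q0 + 2 * A i j q1.
Proof.
rewrite LmatE !big_ord_recr big_ord0 /= add0r mul1r.
have -> : widen_ord (leqnSn 1) ord_max = q0 by apply: val_inj.
by have -> : ord_max = q1 by apply: val_inj.
Qed.

Lemma n2 (A B : hypermatrix 2) : is_ASHM A -> is_ASHM B -> Lmat A = Lmat B -> A = B.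
Proof.
move=> hA hB hL; apply/ffunP => i; apply: functional_extensionality => j;
  apply: functional_extensionality => k.
have W : A i j q0 + 2 * A i j q1 == B i j q0 + 2 * B i j q1.
  by have := congr1 (fun M : 'M[int]_2 => M i j) hL; rewrite /= !L2E => ->.
have VA : P2 (A i j q0) (A i j q1).
  by case/and3P: hA => _ _ /forallP /(_ i) /forallP /(_ j); rewrite enum2 /=; exact: alt2.
have VB : P2 (B i j q0) (B i j q1).
  by case/and3P: hB => _ _ /forallP /(_ i) /forallP /(_ j); rewrite enum2 /=; exact: alt2.
have := H2 _ _ _ _ VA VB; rewrite W /= => /andP[/eqP e0 /eqP e1].
by case: (ord2 k) => ->.
Qed.

Lemma n1 (A B : hypermatrix 1) : is_ASHM A -> is_ASHM B -> A = B.
Proof.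
have E : enum 'I_1 = [:: ord0] by apply: (inj_map val_inj); rewrite val_enum_ord.
move=> hA hB; apply/ffunP => i; apply: functional_extensionality => j;
  apply: functional_extensionality => k.
have VA : A i j ord0 == 1.
  by case/and3P: hA => _ _ /forallP /(_ i) /forallP /(_ j); rewrite E /=; exact: alt1.
have VB : B i j ord0 == 1.
  by case/and3P: hB => _ _ /forallP /(_ i) /forallP /(_ j); rewrite E /=; exact: alt1.
by rewrite (ord1 k) (eqP VA) (eqP VB).
Qed.

Theorem part1 : (forall n : nat, (n <= 3)%N ->
     forall A B : hypermatrix n, is_ASHM A -> is_ASHM B ->
       Lmat A = Lmat B -> A = B).
Proof.
case=> [|[|[|[|n]]]] // _ A B hA hB hL.
- by apply/ffunP => -[].
- exact: n1.
- exact: n2.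
- exact: n3.
Qed.

Definition mkH (d : seq (seq (seq int))) : hypermatrix 4 :=
  [ffun i : 'I_4 => fun j k : 'I_4 => nth 0 (nth [::] (nth [::] d i) j) k].
Definition dA : seq (seq (seq int)) :=
[:: [:: [:: 0; 0; 0; 1]; [:: 0; 0; 1; 0]; [:: 0; 1; 0; 0]; [:: 1; 0; 0; 0]];
  [:: [:: 0; 0; 1; 0]; [:: 0; 1; 0; 0]; [:: 1; -1; 0; 1]; [:: 0; 1; 0; 0]];
  [:: [:: 0; 1; 0; 0]; [:: 1; -1; 0; 1]; [:: 0; 1; 0; 0]; [:: 0; 0; 1; 0]];
  [:: [:: 1; 0; 0; 0]; [:: 0; 1; 0; 0]; [:: 0; 0; 1; 0]; [:: 0; 0; 0; 1]]].
Definition dB : seq (seq (seq int)) :=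
[:: [:: [:: 0; 0; 0; 1]; [:: 0; 0; 1; 0]; [:: 0; 1; 0; 0]; [:: 1; 0; 0; 0]];
  [:: [:: 0; 0; 1; 0]; [:: 1; 0; -1; 1]; [:: 0; 0; 1; 0]; [:: 0; 1; 0; 0]];
  [:: [:: 0; 1; 0; 0]; [:: 0; 0; 1; 0]; [:: 1; 0; -1; 1]; [:: 0; 0; 1; 0]];
  [:: [:: 1; 0; 0; 0]; [:: 0; 1; 0; 0]; [:: 0; 0; 1; 0]; [:: 0; 0; 0; 1]]].

Lemma enum4 : enum 'I_4 = [:: @Ordinal 4 0 isT; @Ordinal 4 1 isT; @Ordinal 4 2 isT; @Ordinal 4 3 isT].
Proof. by apply: (inj_map val_inj); rewrite val_enum_ord. Qed.

Lemma exA : is_ASHM (mkH dA).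
Proof.
by apply/and3P; split; apply/forallP=> a; apply/forallP=> b; rewrite enum4 /= !ffunE;
  case: a => [[|[|[|[|?]]]] ?] //; case: b => [[|[|[|[|?]]]] ?] //; vm_compute.
Qed.
Lemma exB : is_ASHM (mkH dB).
Proof.
by apply/and3P; split; apply/forallP=> a; apply/forallP=> b; rewrite enum4 /= !ffunE;
  case: a => [[|[|[|[|?]]]] ?] //; case: b => [[|[|[|[|?]]]] ?] //; vm_compute.
Qed.
Lemma exNE : mkH dA <> mkH dB.
Proof.
move/(congr1 (fun f : hypermatrix 4 => f (inord 1) (inord 1) (inord 1))).
by rewrite !ffunE inordK.
Qed.
Lemma exL : Lmat (mkH dA) = Lmat (mkH dB).
Proof.
apply/matrixP => i j; rewrite !LmatE !big_ord_recr !big_ord0 /= !ffunE.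
by case: i => [[|[|[|[|i]]]] Hi] //; case: j => [[|[|[|[|j]]]] Hj] //; vm_compute.
Qed.

Theorem theorem2p9 :
  (forall n : nat, (n <= 3)%N ->
     forall A B : hypermatrix n, is_ASHM A -> is_ASHM B ->
       Lmat A = Lmat B -> A = B) /\
  (exists A B : hypermatrix 4,
     [/\ is_ASHM A, is_ASHM B, A <> B & Lmat A = Lmat B]).
Proof.
split; first exact: part1.
by exists (mkH dA), (mkH dB); split; [exact: exA | exact: exB | exact: exNE | exact: exL].
Qed.
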